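(* Let $N, M \in \mathrm{GL}(3,\mathbb{Z})$ satisfy: (i) $NM = MN$; (ii) $1$ is an eigenvalue of $N^n M^m$ for all $(n,m) \in \mathbb{Z}^2$; (iii) $\{k \in \mathbb{Z}^3 : N^n M^m k = k \text{ for all } (n,m) \in \mathbb{Z}^2\} = \{0\}$. Let $C \in \mathrm{GL}(3,\mathbb{Z})$ commute with both $N$ and $M$, and suppose $1$ is an eigenvalue of $N^n M^m C^s$ for all $(n,m,s) \in \mathbb{Z}^3$. Then $C$ belongs to the subgroup of $\mathrm{GL}(3,\mathbb{Z})$ generated by $N$ and $M$. *)

(* Defs.v *)
From HB Require Import structures.
From mathcomp Require Import all_boot all_order all_algebra.
Set Implicit Arguments. Unset Strict Implicit. Unset Printing Implicit Defensive.
Import Order.TTheory GRing.Theory Num.Theory.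
Local Open Scope ring_scope.

Definition GL3Z (A : 'M[int]_3) : Prop := A \in unitmx.

Definition has_eigenvalue1 (A : 'M[int]_3) : Prop :=
  eigenvalue (map_mx (intr : int -> rat) A) 1.

Inductive gen_subgroup2 (N M : 'M[int]_3) : 'M[int]_3 -> Prop :=
  | gen_N : gen_subgroup2 N M N
  | gen_M : gen_subgroup2 N M M
  | gen_1 : gen_subgroup2 N M 1
  | gen_mul A B : gen_subgroup2 N M A -> gen_subgroup2 N M B -> gen_subgroup2 N M (A * B)
  | gen_inv A : gen_subgroup2 N M A -> gen_subgroup2 N M (A^-1).

(* Main.v *)
Require Import Defs.
From HB Require Import structures.
From Stdlib Require Import Classical.
From mathcomp Require Import all_boot all_order all_algebra all_field ring.
Import Order.TTheory GRing.Theory Num.Theory.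
Set Implicit Arguments. Unset Strict Implicit. Unset Printing Implicit Defensive.
Local Open Scope ring_scope.

Lemma trigM (R : comNzRingType) n (A B : 'M[R]_n) :
  is_trig_mx A -> is_trig_mx B -> is_trig_mx (A *m B).
Proof.
move=> /is_trig_mxP tA /is_trig_mxP tB; apply/is_trig_mxP => i j lt_ij.
rewrite mxE big1 // => k _; have [lt_ik|le_ki] := ltnP i k.
  by rewrite tA ?mul0r.
by rewrite tB ?mulr0 // (leq_ltn_trans le_ki lt_ij).
Qed.

Lemma trigM_diag (R : comNzRingType) n (A B : 'M[R]_n) i :
  is_trig_mx A -> is_trig_mx B -> (A *m B) i i = A i i * B i i.
Proof.
move=> /is_trig_mxP tA /is_trig_mxP tB.
rewrite mxE (bigD1 i) //= big1 ?addr0 // => k nki.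
case: (ltngtP i k) => h; first by rewrite tA ?mul0r.
  by rewrite tB ?mulr0.
by move: nki; rewrite -val_eqE /= h eqxx.
Qed.

Lemma trig1 (R : comNzRingType) n : is_trig_mx (1%:M : 'M[R]_n).
Proof. by apply/is_trig_mxP => i j lt; rewrite mxE -val_eqE /= (ltn_eqF lt). Qed.

Lemma trigD (R : comNzRingType) n (A B : 'M[R]_n) :
  is_trig_mx A -> is_trig_mx B -> is_trig_mx (A + B).
Proof.
move=> /is_trig_mxP tA /is_trig_mxP tB; apply/is_trig_mxP => i j lt.
by rewrite mxE tA ?tB ?addr0.
Qed.

Lemma trigZ (R : comNzRingType) n (A : 'M[R]_n) c :
  is_trig_mx A -> is_trig_mx (c *: A).
Proof.
move=> /is_trig_mxP tA; apply/is_trig_mxP => i j lt.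
by rewrite mxE tA ?mulr0.
Qed.

Lemma trigN (R : comNzRingType) n (A : 'M[R]_n) :
  is_trig_mx A -> is_trig_mx (- A).
Proof.
move=> /is_trig_mxP tA; apply/is_trig_mxP => i j lt.
by rewrite mxE tA ?oppr0.
Qed.

Lemma trigX (R : comNzRingType) n (A : 'M[R]_n.+1) k :
  is_trig_mx A -> is_trig_mx (A ^+ k) /\ forall i, (A ^+ k) i i = A i i ^+ k.
Proof.
move=> tA; elim: k => [|k [IH1 IH2]].
  by rewrite expr0; split; [exact: trig1 | move=> i; rewrite mxE eqxx].
rewrite exprS -mulmxE; split; first exact: trigM.
by move=> i; rewrite trigM_diag // IH2 exprS.
Qed.
Definition supp (F : fieldType) n (v : 'cV[F]_n) (k : nat) :=
  forall i : 'I_n, (i < k)%N -> v i 0 = 0.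

Lemma supp_step (F : fieldType) n (A : 'M[F]_n) (v : 'cV_n) (k : nat) :
  is_trig_mx A -> supp v k -> (forall i : 'I_n, i = k :> nat -> A i i = 0) ->
  supp (A *m v) k.+1.
Proof.
move=> /is_trig_mxP tA sv dA i lik; rewrite mxE big1 // => j _.
case: (ltnP i j) => [lij|lji]; first by rewrite tA ?mul0r.
case: (ltnP j k) => [ljk|lkj]; first by rewrite sv ?mulr0.
have ej : j = i by apply/val_inj/eqP; rewrite eqn_leq lji /= (leq_trans _ lkj).
by rewrite ej dA ?mul0r //; apply/eqP; rewrite eqn_leq -ltnS lik /= -ej.
Qed.

Lemma supp_trig (F : fieldType) n (A : 'M[F]_n) (v : 'cV_n) (k : nat) :
  is_trig_mx A -> supp v k -> supp (A *m v) k.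
Proof.
move=> /is_trig_mxP tA sv i lik; rewrite mxE big1 // => j _.
case: (ltnP i j) => [lij|lji]; first by rewrite tA ?mul0r.
by rewrite sv ?mulr0 // (leq_ltn_trans lji lik).
Qed.

Lemma supp3 (F : fieldType) (v : 'cV[F]_3) : supp v 3 -> v = 0.
Proof. by move=> sv; apply/matrixP => i j; rewrite ord1 mxE sv. Qed.

Definition Zm (F : fieldType) (X Y : 'M[F]_3) (j : 'I_3) : 'M[F]_3 :=
  X - (X j j)%:M + ((X j j == 0)%:R : F) *: (Y - (Y j j)%:M).

Lemma comm_lin (F : fieldType) (X Y W : 'M[F]_3) (x y t : F) :
  X *m W = W *m X -> Y *m W = W *m Y ->
  (X - x%:M + t *: (Y - y%:M)) *m W = W *m (X - x%:M + t *: (Y - y%:M)).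
Proof.
move=> hX hY.
by rewrite mulmxDl mulmxDr !mulmxBl !mulmxBr hX scalar_mxC -!scalemxAl -scalemxAr
  mulmxBl mulmxBr hY scalar_mxC.
Qed.

Lemma trig_scalar (F : fieldType) n (x : F) : is_trig_mx (x%:M : 'M[F]_n).
Proof. by rewrite -scalemx1; apply/trigZ/trig1. Qed.

Lemma trigZm (F : fieldType) (X Y : 'M[F]_3) j :
  is_trig_mx X -> is_trig_mx Y -> is_trig_mx (Zm X Y j).
Proof.
move=> tX tY; rewrite /Zm; apply: trigD; first by apply: trigD => //; apply/trigN/trig_scalar.
by apply/trigZ/trigD => //; apply/trigN/trig_scalar.
Qed.

Lemma Zm_diag (F : fieldType) (X Y : 'M[F]_3) j i :
  Zm X Y j i i = X i i - X j j + ((X j j == 0)%:R) * (Y i i - Y j j).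
Proof. by rewrite /Zm !mxE eqxx !mulr1n. Qed.

Lemma Zm_nz (F : fieldType) (X Y : 'M[F]_3) j i :
  X i i = 0 -> Y i i = 0 -> ~ (X j j = 0 /\ Y j j = 0) -> Zm X Y j i i != 0.
Proof.
move=> xi yi nj; rewrite Zm_diag xi yi !sub0r.
have [xj0|xjn] := eqVneq (X j j) 0.
  rewrite xj0 oppr0 add0r mul1r oppr_eq0; apply/eqP => yj; exact: nj.
by rewrite mul0r addr0 oppr_eq0.
Qed.

Lemma mul_delta_col (F : fieldType) (A : 'M[F]_3) (k i : 'I_3) :
  (A *m (delta_mx k 0 : 'cV[F]_3)) i 0 = A i k.
Proof.
rewrite mxE (bigD1 k) //= !mxE !eqxx mulr1 big1 ?addr0 // => j njk.
by rewrite !mxE (negPf njk) mulr0.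
Qed.

Lemma supp_delta (F : fieldType) (k : 'I_3) : supp (delta_mx k 0 : 'cV[F]_3) k.
Proof.
move=> i lik; rewrite mxE; case: eqP => //= eik; by rewrite eik ltnn in lik.
Qed.

Lemma fixvec (F : fieldType) (X Y : 'M[F]_3) :
  is_trig_mx X -> is_trig_mx Y -> X *m Y = Y *m X ->
  (exists i, X i i = 0 /\ Y i i = 0) ->
  exists2 u : 'cV[F]_3, u != 0 & X *m u = 0 /\ Y *m u = 0.
Proof.
move=> tX tY cXY [i [xi yi]].
pose o0 : 'I_3 := @Ordinal 3 0 isT.
pose o1 : 'I_3 := @Ordinal 3 1 isT.
pose o2 : 'I_3 := @Ordinal 3 2 isT.
have cZ : forall j, X *m Zm X Y j = Zm X Y j *m X /\ Y *m Zm X Y j = Zm X Y j *m Y.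
  move=> j; split; symmetry; apply: comm_lin => //.
have cZZ : forall j k, Zm X Y j *m Zm X Y k = Zm X Y k *m Zm X Y j.
  move=> j k; apply: comm_lin; [exact: (proj1 (cZ k)) | exact: (proj2 (cZ k))].
have Zd : forall (j : 'I_3) (v : 'cV[F]_3) (k : nat), j = k :> nat -> supp v k -> supp (Zm X Y j *m v) k.+1.
  move=> j v k ejk sv; apply: supp_step => //; first exact: trigZm.
  move=> l elk; have -> : l = j by apply/val_inj; rewrite /= elk ejk.
  by rewrite Zm_diag !subrr mulr0 addr0.
have Xd : forall (W : 'M[F]_3) (v : 'cV[F]_3) (k : 'I_3), is_trig_mx W -> W k k = 0 -> supp v k -> supp (W *m v) k.+1.
  by move=> W v k tW Wk sv; apply: supp_step => // l elk; have -> : l = k by apply/val_inj.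
have cv : forall j, ~~ ((X j j == 0) && (Y j j == 0)) -> ~ (X j j = 0 /\ Y j j = 0).
  by move=> j nj [a b]; move: nj; rewrite a b eqxx.
have dnz : forall k : 'I_3, (delta_mx k 0 : 'cV[F]_3) != 0.
  move=> k; apply/negP => /eqP/matrixP/(_ k 0); rewrite !mxE !eqxx /=.
  by move/eqP; rewrite oner_eq0.
have unz : forall (u : 'cV[F]_3) k, u k 0 != 0 -> u != 0.
  by move=> u k; apply: contra => /eqP ->; rewrite mxE.
case: (boolP ((X o2 o2 == 0) && (Y o2 o2 == 0))) => [/andP[/eqP x2 /eqP y2] | /cv n2].
  exists (delta_mx o2 0) => //; split.
    apply: supp3; exact: (Xd X _ o2 tX x2 (@supp_delta F o2)).
  apply: supp3; exact: (Xd Y _ o2 tY y2 (@supp_delta F o2)).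
case: (boolP ((X o1 o1 == 0) && (Y o1 o1 == 0))) => [/andP[/eqP x1 /eqP y1] | /cv n1].
  exists (Zm X Y o2 *m delta_mx o1 0).
    by apply: (unz _ o1); rewrite mul_delta_col; apply: Zm_nz.
  split.
    rewrite mulmxA (proj1 (cZ o2)) -mulmxA.
    apply: supp3; exact: (Zd o2 _ 2 erefl (Xd X _ o1 tX x1 (@supp_delta F o1))).
  rewrite mulmxA (proj2 (cZ o2)) -mulmxA.
  apply: supp3; exact: (Zd o2 _ 2 erefl (Xd Y _ o1 tY y1 (@supp_delta F o1))).
have [x0 y0] : X o0 o0 = 0 /\ Y o0 o0 = 0.
  move: i xi yi; case=> [[|[|[|m]]] Hi] //= xi yi.
  - by split; rewrite -[o0](@val_inj _ _ _ (Ordinal Hi)).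
  - by exfalso; apply: n1; split; rewrite -[o1](@val_inj _ _ _ (Ordinal Hi)).
  - by exfalso; apply: n2; split; rewrite -[o2](@val_inj _ _ _ (Ordinal Hi)).
have tZZ : is_trig_mx (Zm X Y o1 *m Zm X Y o2) by apply: trigM; apply: trigZm.
exists ((Zm X Y o1 *m Zm X Y o2) *m delta_mx o0 0).
  apply: (unz _ o0); rewrite mul_delta_col trigM_diag ?trigZm //.
  by rewrite mulf_neq0 //; apply: Zm_nz.
split.
  rewrite !mulmxA (proj1 (cZ o1)) -[Zm X Y o1 *m X *m _]mulmxA (proj1 (cZ o2)) mulmxA cZZ -!mulmxA.
  apply: supp3; exact: (Zd o2 _ 2 erefl (Zd o1 _ 1 erefl (Xd X _ o0 tX x0 (@supp_delta F o0)))).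
rewrite !mulmxA (proj2 (cZ o1)) -[Zm X Y o1 *m Y *m _]mulmxA (proj2 (cZ o2)) mulmxA cZZ -!mulmxA.
apply: supp3; exact: (Zd o2 _ 2 erefl (Zd o1 _ 1 erefl (Xd Y _ o0 tY y0 (@supp_delta F o0)))).
Qed.

Definition subgrp (G : zmodType) (P : G -> bool) := forall x y, P x -> P y -> P (x - y).

Lemma sg0 (G : zmodType) (P : G -> bool) x : subgrp P -> P x -> P 0.
Proof. by move=> sP Px; rewrite -(subrr x); apply: (sP). Qed.

Lemma sgD (G : zmodType) (P : G -> bool) x y : subgrp P -> P x -> P y -> P (x + y).
Proof.
move=> sP Px Py; rewrite -[y]opprK -[- y]add0r; apply: (sP) => //.
by apply: (sP) => //; apply: sg0 Px.
Qed.

Lemma sgB1 (G : zmodType) (P : G -> bool) x y : subgrp P -> P y -> P (x + y) -> P x.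
Proof. by move=> sP Py Pxy; rewrite -(addrK y x); apply: (sP). Qed.

Lemma sgB2 (G : zmodType) (P : G -> bool) x y : subgrp P -> P x -> P (x + y) -> P y.
Proof. by move=> sP Px Pxy; rewrite addrC in Pxy; apply: sgB1 Pxy. Qed.

Lemma only_dbl (G : zmodType) (P Q R : G -> bool) :
  subgrp P -> subgrp Q -> subgrp R -> (forall g, [|| P g, Q g | R g]) ->
  forall h, Q h -> ~~ P h -> forall g, P g -> ~~ Q g -> ~~ R g -> Q (g + g).
Proof.
move=> sP sQ sR cov h Qh nPh g Pg nQg nRg.
have nP1 : ~~ P (h + g) by apply: contra nPh => /(sgB1 sP Pg).
have nQ1 : ~~ Q (h + g) by apply: contra nQg => /(sgB2 sQ Qh).
have R1 : R (h + g) by move: (cov (h + g)); rewrite (negPf nP1) (negPf nQ1).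
have nP2 : ~~ P (h + g + g).
  by apply: contra nPh => H; apply: (sgB1 sP (sgD sP Pg Pg)); rewrite addrA.
have nR2 : ~~ R (h + g + g) by apply: contra nRg => /(sgB2 sR R1).
have Q2 : Q (h + (g + g)).
  by move: (cov (h + g + g)); rewrite (negPf nP2) (negPf nR2) orbF addrA.
exact: sgB2 sQ Qh Q2.
Qed.

Lemma no_two (G : zmodType) (P Q R : G -> bool) :
  subgrp P -> subgrp Q -> subgrp R -> (forall g, [|| P g, Q g | R g]) ->
  forall x, R x -> ~~ P x -> ~~ Q x -> forall g, P g -> Q g -> R g.
Proof.
move=> sP sQ sR cov x Rx nPx nQx g Pg Qg.
have nP1 : ~~ P (g + x) by apply: contra nPx => /(sgB2 sP Pg).
have nQ1 : ~~ Q (g + x) by apply: contra nQx => /(sgB2 sQ Qg).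
have R1 : R (g + x) by move: (cov (g + x)); rewrite (negPf nP1) (negPf nQ1).
exact: sgB1 sR Rx R1.
Qed.

Lemma two_cover (G : zmodType) (P Q : G -> bool) :
  subgrp P -> subgrp Q -> (forall g, P g || Q g) ->
  (forall g, P g) \/ (forall g, Q g).
Proof.
move=> sP sQ cov.
destruct (classic (forall g, P g)) as [H|H]; first by left.
right => g; apply: NNPP => nQg.
apply: H => x; apply: NNPP => nPx.
have Qx : Q x by case/orP: (cov x) => // /nPx.
have Pg : P g by case/orP: (cov g) => // /nQg.
have := cov (x + g); case/orP => H.
  by apply: nPx; apply: sgB1 sP Pg H.
by apply: nQg; apply: sgB2 sQ Qx H.
Qed.

Lemma only_wit (G : zmodType) (P Q R : G -> bool) :
  subgrp P -> subgrp Q -> subgrp R -> (forall g, [|| P g, Q g | R g]) ->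
  ~ (forall g, Q g) -> ~ (forall g, R g) ->
  exists x, [&& P x, ~~ Q x & ~~ R x].
Proof.
move=> sP sQ sR cov nQ nR.
apply: NNPP => H; have cov' : forall g, Q g || R g.
  move=> g; apply: NNPP => H1; apply: H; exists g.
  by move: (cov g) H1; case: (P g) (Q g) (R g) => [] [] [].
by case: (two_cover sQ sR cov').
Qed.

Lemma cover3 (G : zmodType) (P Q R : G -> bool) :
  subgrp P -> subgrp Q -> subgrp R -> (forall g, [|| P g, Q g | R g]) ->
  ~ (forall g, P g) -> ~ (forall g, Q g) -> ~ (forall g, R g) ->
  forall g, [&& P (g + g), Q (g + g) & R (g + g)].
Proof.
move=> sP sQ sR cov nP nQ nR.
have covQ : forall g, [|| Q g, P g | R g].
  by move=> g; move: (cov g); case: (P g) (Q g) (R g) => [] [] [].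
have covR : forall g, [|| R g, P g | Q g].
  by move=> g; move: (cov g); case: (P g) (Q g) (R g) => [] [] [].
have covPR : forall g, [|| P g, R g | Q g].
  by move=> g; move: (cov g); case: (P g) (Q g) (R g) => [] [] [].
have covQR : forall g, [|| Q g, R g | P g].
  by move=> g; move: (cov g); case: (P g) (Q g) (R g) => [] [] [].
have covRQ : forall g, [|| R g, Q g | P g].
  by move=> g; move: (cov g); case: (P g) (Q g) (R g) => [] [] [].
have [xP /and3P[PxP nQxP nRxP]] := only_wit sP sQ sR cov nQ nR.
have [xQ /and3P[QxQ nPxQ nRxQ]] := only_wit sQ sP sR covQ nP nR.
have [xR /and3P[RxR nPxR nQxR]] := only_wit sR sP sQ covR nP nQ.
move=> g.
case Pg: (P g); case Qg: (Q g); case Rg: (R g).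
- by rewrite !sgD.
- by move: (no_two sP sQ sR cov RxR nPxR nQxR Pg Qg); rewrite Rg.
- by move: (no_two sP sR sQ covPR QxQ nPxQ nRxQ Pg Rg); rewrite Qg.
- apply/and3P; split; first exact: sgD.
    by apply: (only_dbl sP sQ sR cov QxQ nPxQ Pg); rewrite ?Qg ?Rg.
  by apply: (only_dbl sP sR sQ covPR RxR nPxR Pg); rewrite ?Qg ?Rg.
- by move: (no_two sQ sR sP covQR PxP nQxP nRxP Qg Rg); rewrite Pg.
- apply/and3P; split.
  + by apply: (only_dbl sQ sP sR covQ PxP nQxP Qg); rewrite ?Pg ?Rg.
  + exact: sgD.
  + by apply: (only_dbl sQ sR sP covQR RxR nQxR Qg); rewrite ?Pg ?Rg.
- apply/and3P; split; last exact: sgD.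
    by apply: (only_dbl sR sP sQ covR PxP nRxP Rg); rewrite ?Pg ?Qg.
  by apply: (only_dbl sR sQ sP covRQ QxQ nRxQ Rg); rewrite ?Pg ?Qg.
- by move: (cov g); rewrite Pg Qg Rg.
Qed.
Lemma fin_bool (a0 a1 a2 b0 b1 b2 c0 c1 c2 : bool) :
  [|| ~~ a0, ~~ a1 | ~~ a2] -> [|| ~~ b0, ~~ b1 | ~~ b2] ->
  [|| ~~ (a0 (+) b0), ~~ (a1 (+) b1) | ~~ (a2 (+) b2)] ->
  (a0 || b0) -> (a1 || b1) -> (a2 || b2) ->
  [|| ~~ c0, ~~ c1 | ~~ c2] ->
  [|| ~~ (a0 (+) c0), ~~ (a1 (+) c1) | ~~ (a2 (+) c2)] ->
  [|| ~~ (b0 (+) c0), ~~ (b1 (+) c1) | ~~ (b2 (+) c2)] ->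
  [|| ~~ (a0 (+) b0 (+) c0), ~~ (a1 (+) b1 (+) c1) | ~~ (a2 (+) b2 (+) c2)] ->
  [&& (a0 != a1) || (b0 != b1), (a0 != a2) || (b0 != b2) & (a1 != a2) || (b1 != b2)] /\
  exists al be : bool, [&& c0 == (al && a0) (+) (be && b0), c1 == (al && a1) (+) (be && b1)
                        & c2 == (al && a2) (+) (be && b2)].
Proof.
case: a0; case: a1; case: a2; case: b0; case: b1; case: b2; case: c0; case: c1; case: c2 => //=;
  move=> *; split=> //;
  first [ by exists false, false | by exists true, false | by exists false, true | by exists true, true].
Qed.

Definition o0 : 'I_3 := @Ordinal 3 0 isT.
Definition o1 : 'I_3 := @Ordinal 3 1 isT.
Definition o2 : 'I_3 := @Ordinal 3 2 isT.

Lemma ord3P (Q : 'I_3 -> Prop) : Q o0 -> Q o1 -> Q o2 -> forall i, Q i.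
Proof.
move=> h0 h1 h2 [[|[|[|m]]] Hi] //.
- by rewrite (_ : Ordinal Hi = o0) //; apply/val_inj.
- by rewrite (_ : Ordinal Hi = o1) //; apply/val_inj.
- by rewrite (_ : Ordinal Hi = o2) //; apply/val_inj.
Qed.

Lemma ord3E (Q : 'I_3 -> bool) : (exists i, Q i) -> [|| Q o0, Q o1 | Q o2].
Proof.
move=> [i]; move: i; apply: (ord3P (Q := fun i => Q i -> [|| Q o0, Q o1 | Q o2])) => /= ->; by rewrite ?orbT.
Qed.

Definition vv (a b c : algC) (g : int * int * int) := a ^ g.1.1 * b ^ g.1.2 * c ^ g.2.

Lemma vvD a b c g h : a != 0 -> b != 0 -> c != 0 -> vv a b c (g + h) = vv a b c g * vv a b c h.
Proof.
move=> a0 b0 c0; rewrite /vv /= !exprzDr ?unitfE //.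
by ring.
Qed.

Lemma neq1N1 : (1 : algC) != -1.
Proof.
by rewrite -subr_eq0 opprK (_ : 1 + 1 = 2%:R) ?pnatr_eq0 // -natrD.
Qed.

Lemma sgn_of (x : algC) : x ^+ 2 = 1 -> x = (-1) ^+ (x == -1).
Proof.
move=> /eqP; rewrite sqrf_eq1 => /orP[/eqP->|/eqP->]; last by rewrite eqxx expr1.
by rewrite (negPf neq1N1) expr0.
Qed.

Lemma sgn1 (e : bool) : ((-1 : algC) ^+ e = 1) -> ~~ e.
Proof. by case: e => //= /eqP; rewrite expr1 eq_sym (negPf neq1N1). Qed.

Lemma sgnX (e al : bool) : ((-1 : algC) ^+ e) ^+ al = (-1) ^+ (al && e).
Proof. by case: al; rewrite ?expr1 ?expr0. Qed.

Lemma sgn_inj (e f : bool) : ((-1 : algC) ^+ e = (-1) ^+ f) -> e = f.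
Proof.
case: e; case: f => //= /eqP; rewrite ?expr1 ?expr0 => /eqP H.
  by move: neq1N1; rewrite H eqxx.
by move: neq1N1; rewrite -H eqxx.
Qed.

Lemma charlemma (a b c : 'I_3 -> algC) :
  (forall i, a i != 0) -> (forall i, b i != 0) -> (forall i, c i != 0) ->
  (forall n m s : int, exists i, a i ^ n * b i ^ m * c i ^ s = 1) ->
  (forall i, ~ (a i = 1 /\ b i = 1)) ->
  (forall i j, i != j -> (a i != a j) || (b i != b j)) /\
  exists al be : bool, forall i, c i = a i ^+ al * b i ^+ be.
Proof.
move=> na nb nc cov D1.
pose P i := fun g => vv (a i) (b i) (c i) g == 1.
have sP : forall i, subgrp (P i).
  move=> i x y /eqP Px /eqP Py; apply/eqP.
  have := vvD (x - y) y (na i) (nb i) (nc i).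
  by rewrite subrK Px Py mulr1 => <-.
have nfull : forall i, ~ (forall g, P i g).
  move=> i H; apply: (D1 i); split.
    by move: (H ((1,0,0))); rewrite /P /vv /= => /eqP; rewrite expr1z !expr0z !mulr1.
  by move: (H ((0,1,0))); rewrite /P /vv /= => /eqP; rewrite expr1z !expr0z mulr1 mul1r.
have covP : forall g, [|| P o0 g, P o1 g | P o2 g].
  move=> g; apply: (ord3E (Q := fun i => P i g)); have [i hi] := cov g.1.1 g.1.2 g.2.
  by exists i; rewrite /P /vv hi eqxx.
have dbl := cover3 (sP o0) (sP o1) (sP o2) covP (nfull o0) (nfull o1) (nfull o2).
have dbl' : forall i g, P i (g + g).
  move=> i g; have /and3P[h0 h1 h2] := dbl g; move: i; exact: (ord3P (Q := fun i => P i (g+g))).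
have sq : forall i, [/\ a i ^+ 2 = 1, b i ^+ 2 = 1 & c i ^+ 2 = 1].
  move=> i; split.
  - by move: (dbl' i (1,0,0)); rewrite /P /vv /= => /eqP; rewrite !expr0z !mulr1.
  - by move: (dbl' i (0,1,0)); rewrite /P /vv /= => /eqP; rewrite !expr0z mulr1 mul1r.
  - by move: (dbl' i (0,0,1)); rewrite /P /vv /= => /eqP; rewrite !expr0z !mul1r.
pose ea i := a i == -1; pose eb i := b i == -1; pose ec i := c i == -1.
have Ea : forall i, a i = (-1) ^+ ea i by move=> i; apply: sgn_of; case: (sq i).
have Eb : forall i, b i = (-1) ^+ eb i by move=> i; apply: sgn_of; case: (sq i).
have Ec : forall i, c i = (-1) ^+ ec i by move=> i; apply: sgn_of; case: (sq i).
have inst : forall (n m s : int) (Q : 'I_3 -> bool),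
    (forall i, a i ^ n * b i ^ m * c i ^ s = 1 -> Q i) -> [|| Q o0, Q o1 | Q o2].
  move=> n m s Q HQ; apply: ord3E; have [i hi] := cov n m s; exists i; exact: HQ.
have g100 : [|| (fun i => ~~ ea i) o0, (fun i => ~~ ea i) o1 | (fun i => ~~ ea i) o2].
  apply: (inst 1 0 0 (fun i => ~~ ea i)).
  move=> i; rewrite ?expr1z ?expr0z ?mulr1 ?mul1r ?(Ea i) ?(Eb i) ?(Ec i).
  rewrite -?signr_addb; exact: sgn1.
have g010 : [|| (fun i => ~~ eb i) o0, (fun i => ~~ eb i) o1 | (fun i => ~~ eb i) o2].
  apply: (inst 0 1 0 (fun i => ~~ eb i)).
  move=> i; rewrite ?expr1z ?expr0z ?mulr1 ?mul1r ?(Ea i) ?(Eb i) ?(Ec i).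
  rewrite -?signr_addb; exact: sgn1.
have g110 : [|| (fun i => ~~ (ea i (+) eb i)) o0, (fun i => ~~ (ea i (+) eb i)) o1 | (fun i => ~~ (ea i (+) eb i)) o2].
  apply: (inst 1 1 0 (fun i => ~~ (ea i (+) eb i))).
  move=> i; rewrite ?expr1z ?expr0z ?mulr1 ?mul1r ?(Ea i) ?(Eb i) ?(Ec i).
  rewrite -?signr_addb; exact: sgn1.
have g001 : [|| (fun i => ~~ ec i) o0, (fun i => ~~ ec i) o1 | (fun i => ~~ ec i) o2].
  apply: (inst 0 0 1 (fun i => ~~ ec i)).
  move=> i; rewrite ?expr1z ?expr0z ?mulr1 ?mul1r ?(Ea i) ?(Eb i) ?(Ec i).
  rewrite -?signr_addb; exact: sgn1.
have g101 : [|| (fun i => ~~ (ea i (+) ec i)) o0, (fun i => ~~ (ea i (+) ec i)) o1 | (fun i => ~~ (ea i (+) ec i)) o2].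
  apply: (inst 1 0 1 (fun i => ~~ (ea i (+) ec i))).
  move=> i; rewrite ?expr1z ?expr0z ?mulr1 ?mul1r ?(Ea i) ?(Eb i) ?(Ec i).
  rewrite -?signr_addb; exact: sgn1.
have g011 : [|| (fun i => ~~ (eb i (+) ec i)) o0, (fun i => ~~ (eb i (+) ec i)) o1 | (fun i => ~~ (eb i (+) ec i)) o2].
  apply: (inst 0 1 1 (fun i => ~~ (eb i (+) ec i))).
  move=> i; rewrite ?expr1z ?expr0z ?mulr1 ?mul1r ?(Ea i) ?(Eb i) ?(Ec i).
  rewrite -?signr_addb; exact: sgn1.
have g111 : [|| (fun i => ~~ (ea i (+) eb i (+) ec i)) o0, (fun i => ~~ (ea i (+) eb i (+) ec i)) o1 | (fun i => ~~ (ea i (+) eb i (+) ec i)) o2].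
  apply: (inst 1 1 1 (fun i => ~~ (ea i (+) eb i (+) ec i))).
  move=> i; rewrite ?expr1z ?expr0z ?mulr1 ?mul1r ?(Ea i) ?(Eb i) ?(Ec i).
  rewrite -?signr_addb; exact: sgn1.
have hD : forall i, ea i || eb i.
  move=> i; case E: (ea i); case F: (eb i) => //; exfalso; apply: (D1 i).
  by rewrite Ea Eb E F !expr0.
have [dist [al [be /and3P[c0 c1 c2]]]] := fin_bool
  g100 g010 g110 (hD o0) (hD o1) (hD o2) g001 g101 g011 g111.
have hl : forall i j, (ea i != ea j) || (eb i != eb j) -> (a i != a j) || (b i != b j).
  move=> i j; rewrite (Ea i) (Ea j) (Eb i) (Eb j).
  by case/orP => h; apply/orP; [left|right]; apply: contra h => /eqP/sgn_inj ->.
move/and3P: dist => [d01 d02 d12].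
split.
  move=> i j nij; apply: hl; move: i j nij.
  apply: (ord3P (Q := fun i => forall j, i != j -> (ea i != ea j) || (eb i != eb j)));
  apply: ord3P; rewrite ?eqxx // => _;
  by rewrite ?d01 ?d02 ?d12 // (eq_sym (ea _)) (eq_sym (eb _)) ?d01 ?d02 ?d12.
exists al, be.
have cE : forall i, ec i = (al && ea i) (+) (be && eb i).
  move=> i; elim/ord3P: i; [exact: (eqP c0) | exact: (eqP c1) | exact: (eqP c2)].
by move=> i; rewrite (Ec i) (Ea i) (Eb i) !sgnX -signr_addb cE.
Qed.

Lemma mxE3 (F : fieldType) (A B : 'M[F]_3) i j :
  (A *m B) i j = A i o0 * B o0 j + A i o1 * B o1 j + A i o2 * B o2 j.
Proof.
rewrite mxE !big_ord_recl big_ord0 addr0 addrA.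
have E0 : (ord0 : 'I_3) = o0 by apply/val_inj.
have E1 : (lift ord0 (ord0 : 'I_2) : 'I_3) = o1 by apply/val_inj.
have E2 : (lift ord0 (lift ord0 (ord0 : 'I_1)) : 'I_3) = o2 by apply/val_inj.
by rewrite E2 E1 E0.
Qed.

Lemma trig3 (F : fieldType) (A : 'M[F]_3) : is_trig_mx A ->
  [/\ A o0 o1 = 0, A o0 o2 = 0 & A o1 o2 = 0].
Proof. by move=> /is_trig_mxP tA; split; apply: tA. Qed.

Lemma key0 (F : fieldType) (x p q r s : F) :
  x * p = q * x -> x * r = s * x -> (p != q) || (r != s) -> x = 0.
Proof.
move=> h1 h2 /orP[] npq.
  apply/eqP; have : x * (p - q) == 0 by rewrite mulrBr h1 mulrC subrr.
  by rewrite mulf_eq0 subr_eq0 (negPf npq) orbF.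
apply/eqP; have : x * (r - s) == 0 by rewrite mulrBr h2 mulrC subrr.
by rewrite mulf_eq0 subr_eq0 (negPf npq) orbF.
Qed.

Lemma uniq_trig (F : fieldType) (TN TM U V : 'M[F]_3) :
  is_trig_mx TN -> is_trig_mx TM -> is_trig_mx U -> is_trig_mx V ->
  U *m TN = TN *m U -> V *m TN = TN *m V ->
  U *m TM = TM *m U -> V *m TM = TM *m V ->
  (forall i, U i i = V i i) ->
  (forall i j, i != j -> (TN i i != TN j j) || (TM i i != TM j j)) ->
  U = V.
Proof.
move=> tN tM tU tV cUN cVN cUM cVM dUV dist.
pose D := U - V.
have tD : is_trig_mx D by apply: trigD => //; apply: trigN.
have dD : forall i, D i i = 0 by move=> i; rewrite !mxE dUV subrr.
have cDN : D *m TN = TN *m D by rewrite mulmxBl mulmxBr cUN cVN.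
have cDM : D *m TM = TM *m D by rewrite mulmxBl mulmxBr cUM cVM.
have [D01 D02 D12] := trig3 tD.
have [N01 N02 N12] := trig3 tN.
have [M01 M02 M12] := trig3 tM.
have eN : forall i j, (D *m TN) i j = (TN *m D) i j by move=> i j; rewrite cDN.
have eM : forall i j, (D *m TM) i j = (TM *m D) i j by move=> i j; rewrite cDM.
have D10 : D o1 o0 = 0.
  move: (eN o1 o0) (eM o1 o0); rewrite /= !mxE3 !dD D12 N12 M12.
  rewrite !mul0r !mulr0 !addr0 !add0r => h1 h2.
  by apply: key0 h1 h2 _; apply: dist.
have D21 : D o2 o1 = 0.
  move: (eN o2 o1) (eM o2 o1); rewrite /= !mxE3 !dD D01 N01 M01.
  rewrite !mul0r !mulr0 !addr0 !add0r => h1 h2.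
  by apply: key0 h1 h2 _; apply: dist.
have D20 : D o2 o0 = 0.
  move: (eN o2 o0) (eM o2 o0); rewrite /= !mxE3 !dD D21 D10.
  rewrite !mul0r !mulr0 !addr0 !add0r => h1 h2.
  by apply: key0 h1 h2 _; apply: dist.
apply/eqP; rewrite -subr_eq0; apply/eqP/matrixP => i j.
rewrite [in RHS]mxE -/D.
move: i j; apply: ord3P; apply: ord3P => //.
Qed.

Lemma descent (N M : 'M[int]_3) (k : 'cV[algC]_3) :
  k != 0 -> map_mx intr N *m k = k -> map_mx intr M *m k = k ->
  exists2 z : 'cV[int]_3, z != 0 & N *m z = z /\ M *m z = z.
Proof.
move=> nk hN hM.
pose B : 'M[int]_(3 + 3, 3) := col_mx (N - 1%:M) (M - 1%:M).
pose Bq := map_mx (intr : int -> rat) B.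
have hB : map_mx (intr : int -> algC) B *m k = 0.
  rewrite map_col_mx mul_col_mx !map_mxB /= !map_scalar_mx /= !rmorph1.
  by rewrite !mulmxBl hN hM !mul_scalar_mx !scale1r !subrr col_mx0.
have eBq : map_mx (ratr : rat -> algC) Bq = map_mx intr B.
  by rewrite -map_mx_comp; apply/matrixP => i j; rewrite !mxE /= ratr_int.
have nrf : ~~ row_free Bq^T.
  apply/negP => rf.
  have rf' : row_free (map_mx (ratr : rat -> algC) Bq)^T.
    by rewrite matrix.map_trmx /row_free mxrank_map.
  move: rf'; rewrite eBq => rf'.
  have : k^T *m (map_mx intr B)^T == 0 by rewrite -trmx_mul hB trmx0.
  by rewrite (mulmx_free_eq0 _ rf') trmx_eq0 (negPf nk).
have : kermx Bq^T != 0 by rewrite kermx_eq0.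
move/rowV0Pn => [r rK nr]; have rB := sub_kermxP rK.
pose d : int := \prod_(j < 3) denq (r 0 j).
pose z : 'rV[int]_3 := \row_i (numq (r 0 i) * \prod_(j < 3 | j != i) denq (r 0 j)).
have hz : map_mx (intr : int -> rat) z = (d%:~R : rat) *: r.
  apply/rowP => i; rewrite !mxE rmorphM /= numqE /d [in RHS](bigD1 i) //= rmorphM /=.
  ring.
have nd : (d%:~R : rat) != 0.
  by rewrite intr_eq0 /d; apply/prodf_neq0 => j _; rewrite denq_neq0.
have nz : z != 0.
  apply: contra nr => /eqP z0; move: hz; rewrite z0 map_mx0 => /eqP.
  by rewrite eq_sym scaler_eq0 (negPf nd).
have zB : z *m B^T = 0.
  have : map_mx (intr : int -> rat) (z *m B^T) = 0.
    by rewrite map_mxM hz -matrix.map_trmx -/Bq -scalemxAl rB scaler0.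
  move/matrixP => H; apply/matrixP => i j; move: (H i j); rewrite !mxE => /eqP.
  by rewrite intr_eq0 => /eqP.
have : B *m z^T = 0 by rewrite -[B]trmxK -trmx_mul zB trmx0.
rewrite mul_col_mx => /eqP; rewrite col_mx_eq0 => /andP[/eqP h1 /eqP h2].
exists z^T; first by rewrite trmx_eq0.
by split; apply/eqP; rewrite -subr_eq0 -[X in _ - X]mul1mx -mulmxBl ?h1 ?h2.
Qed.

Lemma eig_trig (T : 'M[algC]_3) (w : 'rV_3) :
  is_trig_mx T -> w != 0 -> w *m T = w -> exists i, T i i = 1.
Proof.
move=> tT nw hw.
have t1 : is_trig_mx (T - 1%:M) by apply: trigD => //; apply/trigN/trig1.
have : \det (T - 1%:M) == 0.
  apply: contraR nw => nd.
  have rf : row_free (T - 1%:M) by rewrite row_free_unit unitmxE unitfE.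
  by rewrite -(mulmx_free_eq0 _ rf) mulmxBr hw mulmx1 subrr.
rewrite det_trig // prodf_seq_eq0 => /hasP[i _]; rewrite !mxE eqxx subr_eq0 => /eqP Ti.
by exists i.
Qed.

Lemma fixpow (X : 'M[int]_3) (z : 'cV[int]_3) :
  X \in unitmx -> X *m z = z -> forall n : int, X ^ n *m z = z.
Proof.
move=> UX hX.
have pos : forall k, X ^+ k *m z = z.
  elim=> [|k IH]; first by rewrite expr0 mul1mx.
  by rewrite exprS -mulmxE -mulmxA IH.
case=> k; first exact: pos.
have UY : X ^+ k.+1 \is a GRing.unit by rewrite unitrX.
rewrite /exprz -{1}(pos k.+1) mulmxA mulmxE mulVr //.
by rewrite mul1mx.
Qed.

Lemma inv_diag (a a' : algC) : a * a' = 1 -> a != 0 /\ a' = a^-1.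
Proof.
move=> h; have na : a != 0 by apply: contra_eq_neq h => ->; rewrite mul0r eq_sym oner_neq0.
split=> //; by rewrite -[a']mul1r -(mulVf na) -mulrA h mulr1.
Qed.

Unset Implicit Arguments.

Theorem lemma2p5 (N M C : 'M[int]_3) :
  GL3Z N -> GL3Z M ->
  N * M = M * N ->
  (forall n m : int, has_eigenvalue1 (N ^ n * M ^ m)) ->
  (forall k : 'cV[int]_3, (forall n m : int, (N ^ n * M ^ m) *m k = k) -> k = 0) ->
  GL3Z C -> C * N = N * C -> C * M = M * C ->
  (forall n m s : int, has_eigenvalue1 (N ^ n * M ^ m * C ^ s)) ->
  gen_subgroup2 N M C.
Proof.
move=> UN UM cNM _ H3 UC cCN cCM H5.
rewrite /GL3Z in UN UM UC.
pose f := fun A : 'M[int]_3 => map_mx (intr : int -> algC) A.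
have fM : forall A B, f (A * B) = f A * f B by move=> A B; rewrite /f rmorphM.
have f1 : f 1 = 1 by rewrite /f rmorph1.
have base : forall x y, x \in [:: N; M; C] -> y \in [:: N; M; C] -> GRing.comm x y.
  move=> x y; rewrite !inE => /or3P[]/eqP-> /or3P[]/eqP->;
  first [exact: commr_refl | exact: cNM | exact: cCN | exact: cCM
        | exact: (commr_sym cNM) | exact: (commr_sym cCN) | exact: (commr_sym cCM)].
have L6 : forall x, x \in [:: N; M; C; N^-1; M^-1; C^-1] ->
    exists2 u, u \in [:: N; M; C] & (x = u \/ x = u^-1).
  move=> x; rewrite !inE.
  case/orP=> [/eqP->|]; first by exists N; rewrite ?inE ?eqxx //; left.
  case/orP=> [/eqP->|]; first by exists M; rewrite ?inE ?eqxx ?orbT //; left.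
  case/orP=> [/eqP->|]; first by exists C; rewrite ?inE ?eqxx ?orbT //; left.
  case/orP=> [/eqP->|]; first by exists N; rewrite ?inE ?eqxx //; right.
  case/orP=> [/eqP->|]; first by exists M; rewrite ?inE ?eqxx ?orbT //; right.
  by move/eqP->; exists C; rewrite ?inE ?eqxx ?orbT //; right.
have comm6 : forall x y, x \in [:: N; M; C; N^-1; M^-1; C^-1] ->
    y \in [:: N; M; C; N^-1; M^-1; C^-1] -> GRing.comm x y.
  move=> x y /L6[u hu [->|->]] /L6[v hv [->|->]].
  - exact: base.
  - exact/commrV/base.
  - by apply/commr_sym/commrV/commr_sym/base.
  - by apply/commrV/commr_sym/commrV/commr_sym/base.
pose As := [seq f x | x <- [:: N; M; C; N^-1; M^-1; C^-1]].
have comA : {in As &, forall A B, comm_mx A B}.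
  move=> A B /mapP[x hx ->] /mapP[y hy ->].
  by rewrite /comm_mx mulmxE -!fM (comm6 x y).
have [P Pu /allP tP] := cotrigonalization comA.
have PU := unitarymx_unit Pu.
pose phi := fun X : 'M[algC]_3 => P *m X *m invmx P.
have tphi : forall x, x \in [:: N; M; C; N^-1; M^-1; C^-1] -> is_trig_mx (phi (f x)).
  move=> x hx; have := tP (f x) (map_f _ hx); rewrite /similar_to /=.
  by rewrite conjumx.
have phiM : forall X Y, phi (X * Y) = phi X * phi Y.
  by move=> X Y; rewrite /phi -!mulmxE !mulmxA mulmxKV.
have phi1 : phi 1 = 1.
  by rewrite /phi mulmx1 mulmxV.
have phiX : forall X k, phi (X ^+ k) = phi X ^+ k.
  by move=> X; elim=> [|k IH]; rewrite ?expr0 ?phi1 // !exprS phiM IH.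
have trigM' : forall X Y : 'M[algC]_3, is_trig_mx X -> is_trig_mx Y ->
    is_trig_mx (X * Y) /\ forall i, (X * Y) i i = X i i * Y i i.
  by move=> X Y tX tY; rewrite -mulmxE; split; [apply: trigM | move=> i; apply: trigM_diag].
have inL : forall x, x \in [:: N; M; C] -> x \in [:: N; M; C; N^-1; M^-1; C^-1] /\
    x^-1 \in [:: N; M; C; N^-1; M^-1; C^-1].
  by move=> x; rewrite !inE => /or3P[]/eqP->; rewrite !eqxx ?orbT.
have powT : forall x, x \in [:: N; M; C] -> forall n : int,
    is_trig_mx (phi (f (x ^ n))) /\ forall i, phi (f (x ^ n)) i i = (phi (f x) i i) ^ n.
  move=> x hx; have [hx1 hx2] := inL x hx.
  have Ux : x \is a GRing.unit by move: hx; rewrite !inE => /or3P[]/eqP->.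
  have tx := tphi x hx1; have txi := tphi _ hx2.
  have [_ di] := trigM' _ _ tx txi.
  have dinv : forall i, phi (f x^-1) i i = (phi (f x) i i)^-1.
    move=> i; have := di i; rewrite -phiM -fM mulrV // f1 phi1 mxE eqxx /=.
    by move/esym/inv_diag => [].
  have fX : forall y k, f (y ^+ k) = f y ^+ k by move=> y k; rewrite /f rmorphXn.
  case=> k.
    by rewrite /= fX phiX; have [t d] := trigX k tx.
  have -> : x ^ Negz k = (x^-1) ^+ k.+1 by rewrite exprVn.
  rewrite fX phiX; have [t d] := trigX k.+1 txi; split=> // i.
  by rewrite d dinv exprVn.
have hN : N \in [:: N; M; C] by rewrite !inE eqxx.
have hM : M \in [:: N; M; C] by rewrite !inE eqxx orbT.
have hC : C \in [:: N; M; C] by rewrite !inE eqxx !orbT.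
pose a i := phi (f N) i i; pose b i := phi (f M) i i; pose c i := phi (f C) i i.
have wordT : forall n m s : int, is_trig_mx (phi (f (N ^ n * M ^ m * C ^ s))) /\
    forall i, phi (f (N ^ n * M ^ m * C ^ s)) i i = a i ^ n * b i ^ m * c i ^ s.
  move=> n m s; rewrite !fM !phiM.
  have [t1 d1] := powT N hN n; have [t2 d2] := powT M hM m; have [t3 d3] := powT C hC s.
  have [t12 d12] := trigM' _ _ t1 t2; have [t123 d123] := trigM' _ _ t12 t3.
  by split=> // i; rewrite d123 d12 d1 d2 d3.
have cov : forall n m s : int, exists i, a i ^ n * b i ^ m * c i ^ s = 1.
  move=> n m s; have [tW dW] := wordT n m s.
  have := H5 n m s; rewrite /has_eigenvalue1.
  rewrite -(eigenvalue_map (ratr : {rmorphism rat -> algC})) rmorph1 -map_mx_comp.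
  have -> : map_mx (ratr \o intr) (N ^ n * M ^ m * C ^ s) = f (N ^ n * M ^ m * C ^ s).
    by apply/matrixP => i j; rewrite !mxE /= ratr_int.
  move/eigenvalueP => [v hv nv].
  have nw : v *m invmx P != 0.
    by rewrite (mulmx_free_eq0 _ _) ?nv // row_free_unit unitmx_inv.
  have := eig_trig tW nw; rewrite /phi !mulmxA mulmxKV // hv scale1r => /(_ erefl) [i hi].
  by exists i; rewrite -dW.
have nz : forall x, x \in [:: N; M; C] -> forall i, phi (f x) i i != 0.
  move=> x hx i; have [hx1 hx2] := inL x hx.
  have Ux : x \is a GRing.unit by move: hx; rewrite !inE => /or3P[]/eqP->.
  have [_ di] := trigM' _ _ (tphi x hx1) (tphi _ hx2).
  have := di i; rewrite -phiM -fM mulrV // f1 phi1 mxE eqxx /=.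
  by move/esym/inv_diag => [].
have cphi : forall x y, x * y = y * x -> phi (f x) * phi (f y) = phi (f y) * phi (f x).
  by move=> x y hxy; rewrite -!phiM -!fM hxy.
have phiK : forall X, invmx P *m phi X *m P = X.
  by move=> X; rewrite /phi !mulmxA mulVmx // mul1mx mulmxKV.
have D1 : forall i, ~ (a i = 1 /\ b i = 1).
  move=> i [ai bi].
  have tN := tphi N (proj1 (inL N hN)); have tM := tphi M (proj1 (inL M hM)).
  have tX : is_trig_mx (phi (f N) - 1%:M) by apply: trigD => //; apply/trigN/trig1.
  have tY : is_trig_mx (phi (f M) - 1%:M) by apply: trigD => //; apply/trigN/trig1.
  have cNM' := cphi N M cNM.
  have cXY : (phi (f N) - 1%:M) *m (phi (f M) - 1%:M) = (phi (f M) - 1%:M) *m (phi (f N) - 1%:M).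
    rewrite mulmxE; apply: commrB; last exact: commr1.
    apply/commr_sym/commrB; last exact: commr1.
    exact/commr_sym.
  have Xi : (phi (f N) - 1%:M) i i = 0 by rewrite mxE -/(a i) ai !mxE eqxx mulr1n subrr.
  have Yi : (phi (f M) - 1%:M) i i = 0 by rewrite mxE -/(b i) bi !mxE eqxx mulr1n subrr.
  have [u nu [hX hY]] := fixvec tX tY cXY (ex_intro _ i (conj Xi Yi)).
  have fixk : forall X, (phi X - 1%:M) *m u = 0 -> X *m (invmx P *m u) = invmx P *m u.
    move=> X /eqP; rewrite mulmxBl mul1mx subr_eq0 => /eqP hu.
    by rewrite -{2}hu /phi !mulmxA mulVmx // mul1mx.
  have nk : invmx P *m u != 0.
    apply: contra nu => /eqP k0; apply/eqP.
    by rewrite -[u]mul1mx -(mulmxV PU) -mulmxA k0 mulmx0.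
  have [z nz' [hzN hzM]] := descent nk (fixk _ hX) (fixk _ hY).
  apply: (negP nz'); apply/eqP; apply: H3 => n m.
  by rewrite -mulmxE -mulmxA !fixpow.
have [dist [al [be hc]]] := charlemma (nz N hN) (nz M hM) (nz C hC) cov D1.
have tN := tphi N (proj1 (inL N hN)); have tM := tphi M (proj1 (inL M hM)).
have tC := tphi C (proj1 (inL C hC)).
have [tNa dNa] := trigX al tN; have [tMb dMb] := trigX be tM.
have [tV dV] := trigM' _ _ tNa tMb.
have cNM' := cphi N M cNM; have cCN' := cphi C N cCN; have cCM' := cphi C M cCM.
have cVN : GRing.comm (phi (f N)) (phi (f N) ^+ al * phi (f M) ^+ be).
  apply: commrM; first exact/commrX/commr_refl.
  exact/commrX.
have cVM : GRing.comm (phi (f M)) (phi (f N) ^+ al * phi (f M) ^+ be).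
  apply: commrM; last exact/commrX/commr_refl.
  exact/commrX/commr_sym.
have eUV := uniq_trig tN tM tC tV cCN' (esym cVN) cCM' (esym cVM) _ dist.
have eC : phi (f C) = phi (f (N ^+ al * M ^+ be)).
  rewrite eUV; last by move=> i; rewrite dV dNa dMb.
  by rewrite fM phiM /f !rmorphXn -!/(f _) !phiX.
have fCeq : f C = f (N ^+ al * M ^+ be) by rewrite -(phiK (f C)) eC phiK.
have Ceq : C = N ^+ al * M ^+ be.
  apply/matrixP => i j; move/matrixP: fCeq => /(_ i j); rewrite !mxE.
  exact: intr_inj.
rewrite Ceq; case: al {dist hc tNa dNa tV dV cVN cVM eUV eC fCeq Ceq};
  case: be {tMb dMb}; rewrite ?expr0 ?expr1 ?mul1r ?mulr1.
- exact: gen_mul (gen_N _ _) (gen_M _ _).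
- exact: gen_N.
- exact: gen_M.
- exact: gen_1.
Qed.
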